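(* If $G\in SVS$, then for every clique $C$ of $G$ the branch graph $B(G/C)$ is perfect.
   Context: All graphs are finite, simple and connected; a clique is a maximal complete set. A graph is split if its vertex set partitions into a stable set $S$ and a clique $K$. For $n\geq 4$, the $n$-sun $S_n$ is the split graph with stable set $\{s_1,\dots,s_n\}$, central clique $\{v_1,\dots,v_n\}$, $N(s_i)=\{v_i,v_{i+1}\}$ for $1\le i\le n-1$ and $N(s_n)=\{v_n,v_1\}$. A split graph $G$ with partition $(S,K)$ belongs to $SVS$ if: $G$ is VPT (a vertex-intersection graph of paths in a tree); every $v\in K$ satisfies $|N(v)\cap S|\le 2$; and whenever $S_k$ with $k=4$ or $k$ odd, $k\ge5$, is an induced subgraph of $G$, some $v\in K$ is adjacent to two non-consecutive vertices of the stable set of that $S_k$. For a clique $C$ of $G$, the branch graph $B(G/C)$ has vertex set the vertices of $V(G)\setminus C$ adjacent to some vertex of $C$, two such vertices $v,w$ being adjacent iff (1) $vw\notin E(G)$; (2) some vertex of $C$ is adjacent to both; (3) there exist $v',w'\in C$ with $v'$ adjacent to $v$ but not $w$, and $w'$ adjacent to $w$ but not $v$. A graph is perfect iff it contains no induced $C_{2n+1}$ or complement of $C_{2n+1}$ with $n\ge2$. *)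

(* Defs.v *)
From mathcomp Require Import all_boot.
Set Implicit Arguments. Unset Strict Implicit. Unset Printing Implicit Defensive.

Definition simple_graph (T : finType) (e : rel T) : Prop :=
  symmetric e /\ irreflexive e.

Definition connected_graph (T : finType) (e : rel T) : Prop :=
  forall x y : T, connect e x y.

Definition complete_set (T : finType) (e : rel T) (A : {set T}) : Prop :=
  forall x y, x \in A -> y \in A -> x != y -> e x y.

Definition stable_set (T : finType) (e : rel T) (A : {set T}) : Prop :=
  forall x y, x \in A -> y \in A -> ~~ e x y.

Definition is_clique (T : finType) (e : rel T) (C : {set T}) : Prop :=
  complete_set e C /\
  forall B : {set T}, complete_set e B -> C \subset B -> B = C.

Definition split_partition (T : finType) (e : rel T) (S K : {set T}) : Prop :=
  stable_set e S /\ is_clique e K /\ S :&: K = set0 /\ S :|: K = [set: T].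

Definition acyclic (U : finType) (tr : rel U) : Prop :=
  forall (x : U) (p : seq U),
    uniq (x :: p) -> path tr x p -> 2 <= size p -> ~~ tr (last x p) x.

Definition is_tree (U : finType) (tr : rel U) : Prop :=
  simple_graph tr /\ connected_graph tr /\ acyclic tr.

Definition tree_path (U : finType) (tr : rel U) (p : seq U) : bool :=
  if p is x :: q then path tr x q && uniq p else false.

Definition VPT (T : finType) (e : rel T) : Prop :=
  exists (U : finType) (tr : rel U), is_tree tr /\
    exists P : T -> seq U, (forall v, tree_path tr (P v)) /\
      forall u v, u != v -> e u v = has (mem (P v)) (P u).

Definition cyc_adj (k : nat) (i j : 'I_k) : bool :=
  (val j == (val i).+1 %% k) || (val i == (val j).+1 %% k).

Definition induced_sun (T : finType) (e : rel T) (k : nat)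
    (s v : 'I_k -> T) : Prop :=
  injective s /\ injective v /\ (forall i j, s i != v j) /\
  (forall i j, i != j -> ~~ e (s i) (s j)) /\
  (forall i j, i != j -> e (v i) (v j)) /\
  (forall i j, e (s i) (v j) = (val j == val i) || (val j == (val i).+1 %% k)).

Definition SVS (T : finType) (e : rel T) (S K : {set T}) : Prop :=
  split_partition e S K /\ VPT e /\
  (forall v, v \in K -> #|[set x in S | e v x]| <= 2) /\
  (forall (k : nat) (s w : 'I_k -> T),
     4 <= k -> (k == 4) || odd k -> induced_sun e s w ->
     exists x, x \in K /\
       exists i j : 'I_k, i != j /\ ~~ cyc_adj i j /\ e x (s i) /\ e x (s j)).

Definition branch_set (T : finType) (e : rel T) (C : {set T}) : {set T} :=
  [set w | (w \notin C) && [exists c in C, e w c]].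

Definition branch_rel (T : finType) (e : rel T) (C : {set T}) : rel T :=
  fun v w =>
    [&& v \in branch_set e C, w \in branch_set e C, v != w, ~~ e v w,
        [exists c in C, e c v && e c w],
        [exists v' in C, e v' v && ~~ e v' w] &
        [exists w' in C, e w' w && ~~ e w' v]].

(* perfect graph (on vertex set A, edges r): no induced odd hole C_{2n+1}
   and no induced odd antihole, n >= 2 (as stated in the paper's context) *)
Definition induced_odd_hole (T : finType) (A : {set T}) (r : rel T) : Prop :=
  exists (m : nat) (f : 'I_m -> T), odd m /\ 5 <= m /\ injective f /\
    (forall i, f i \in A) /\ (forall i j, r (f i) (f j) = cyc_adj i j).

Definition induced_odd_antihole (T : finType) (A : {set T}) (r : rel T) : Prop :=
  exists (m : nat) (f : 'I_m -> T), odd m /\ 5 <= m /\ injective f /\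
    (forall i, f i \in A) /\
    (forall i j, r (f i) (f j) = (i != j) && ~~ cyc_adj i j).

Definition perfect_on (T : finType) (A : {set T}) (r : rel T) : Prop :=
  ~ induced_odd_hole A r /\ ~ induced_odd_antihole A r.

(* Main.v *)
Require Import Defs.
From mathcomp Require Import all_boot.
From mathcomp Require Import zify.
Set Implicit Arguments. Unset Strict Implicit. Unset Printing Implicit Defensive.

Lemma val_ordS k (i : 'I_k) :
  val (ordS i) = if (val i).+1 == k then 0 else (val i).+1.
Proof.
rewrite /=; case: eqP => [->|ne]; first by rewrite modnn.
rewrite modn_small //; have := ltn_ord i; lia.
Qed.

Lemma ordS_neq k (i : 'I_k) : 1 < k -> ordS i != i.
Proof.
move=> k1; apply/eqP => /(congr1 val); rewrite val_ordS /=.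
have := ltn_ord i; case: ifP => /eqP h; lia.
Qed.

Lemma ordSS_neq k (i : 'I_k) : 2 < k -> ordS (ordS i) != i.
Proof.
move=> k2; apply/eqP => E; have H1 := val_ordS i; have H2 := val_ordS (ordS i).
rewrite E in H2; move: H1 H2 (ltn_ord i).
move: (val (ordS i)) (val i) => a b.
case: ifP => /eqP h1; case: ifP => /eqP h2; lia.
Qed.

Lemma pred_neq k (i : 'I_k) : 1 < k -> ord_pred i != i.
Proof.
move=> k1; apply/eqP => h; move: (ordS_neq (ord_pred i) k1).
by rewrite ord_predK h eqxx.
Qed.

Lemma pred_pred_neq k (i : 'I_k) : 2 < k -> ord_pred (ord_pred i) != i.
Proof.
move=> k2; apply/eqP => h; move: (ordSS_neq (ord_pred (ord_pred i)) k2).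
by rewrite !ord_predK h eqxx.
Qed.

Lemma cycE k (i j : 'I_k) : cyc_adj i j = (j == ordS i) || (i == ordS j).
Proof. by []. Qed.

Lemma cyc_small m (i j : 'I_m) : (val i).+1 < m -> (val j).+1 < m ->
  cyc_adj i j = (val j == (val i).+1) || (val i == (val j).+1).
Proof. by move=> hi hj; rewrite /cyc_adj !modn_small. Qed.

Definition h5 (i : 'I_5) : 'I_5 := inord ((2 * i) %% 5).
Lemma h5E : forall i j : 'I_5, (h5 i != h5 j) && ~~ cyc_adj (h5 i) (h5 j) = cyc_adj i j.
Proof. case=> [[|[|[|[|[|?]]]]] ?] //; case=> [[|[|[|[|[|?]]]]] ?] //.
all: rewrite /h5 /cyc_adj -!val_eqE /= !inordK //.
Qed.
Lemma h5inj : injective h5.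
Proof. move=> i j /(congr1 val); rewrite /h5 /=.  case: i j => [[|[|[|[|[|?]]]]] ?] //; case=> [[|[|[|[|[|?]]]]] ?] //; rewrite !inordK //.
all: move=> _; exact: val_inj.
Qed.

Section Sec.
Variables (T : finType) (e : rel T) (S K : {set T}).
Hypothesis esym : symmetric e.
Hypothesis stS : stable_set e S.
Hypothesis cK : complete_set e K.
Hypothesis disj : S :&: K = set0.
Hypothesis cov : S :|: K = [set: T].
Hypothesis deg : forall v, v \in K -> #|[set x in S | e v x]| <= 2.
Hypothesis sunH : forall (k : nat) (s w : 'I_k -> T),
     4 <= k -> (k == 4) || odd k -> induced_sun e s w ->
     exists x, x \in K /\
       exists i j : 'I_k, i != j /\ ~~ cyc_adj i j /\ e x (s i) /\ e x (s j).

Lemma SK x : x \in S -> x \in K -> False.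
Proof.
move=> xS xK; have : x \in S :&: K by rewrite inE xS xK.
by rewrite disj inE.
Qed.

Lemma SorK x : x \notin S -> x \in K.
Proof.
move=> xS; have : x \in S :|: K by rewrite cov inE.
by rewrite inE (negbTE xS).
Qed.

Lemma nbrK x y : y \in S -> e x y -> x \in K.
Proof.
move=> yS xy; case: (boolP (x \in S)) => [xS|/SorK //].
by move: (stS xS yS); rewrite xy.
Qed.

Lemma three c a b d : c \in K -> a \in S -> b \in S -> d \in S -> a != b ->
  e c a -> e c b -> e c d -> d = a \/ d = b.
Proof.
move=> cK' aS bS dS ab ca cb cd.
case: (eqVneq d a) => [->|da]; first by left.
case: (eqVneq d b) => [->|db]; first by right.
exfalso.
have sub : d |: [set a; b] \subset [set x in S | e c x].
  apply/subsetP => x; rewrite !inE => /or3P [] /eqP ->; rewrite ?aS ?bS ?dS //.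
have := subset_leq_card sub; have := deg cK'.
rewrite cardsU1 cards2 !inE ab negb_or da db /=. lia.
Qed.

Lemma bfacts C v w : branch_rel e C v w -> [/\ v \notin C, w \notin C & v != w].
Proof.
by case/and5P; rewrite /branch_set !inE => /andP [vC _] /andP [wC _] vw.
Qed.

Lemma fact1 C v w : branch_rel e C v w ->
  [/\ v \in S, w \in S & exists c, [/\ c \in C, c \in K, e c v & e c w]].
Proof.
move=> B; have [vC wC vw] := bfacts B.
case/and5P: B => _ _ _ nvw /and3P [/existsP [c /andP [cC /andP [cv cw]]]
  /existsP [v' /andP [v'C /andP [v'v v'w]]] /existsP [w' /andP [w'C /andP [w'w w'v]]]].
have vS : v \in S.
  case: (boolP (v \in S)) => // /SorK vK.
  case: (boolP (w \in S)) => [wS|/SorK wK].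
    have w'K := nbrK wS w'w.
    have : w' != v by apply/eqP => E; move: vC; rewrite -E w'C.
    by move/(cK w'K vK); rewrite (negbTE w'v).
  by move: (cK vK wK vw); rewrite (negbTE nvw).
have wS : w \in S.
  case: (boolP (w \in S)) => // /SorK wK.
  have v'K := nbrK vS v'v.
  have : v' != w by apply/eqP => E; move: wC; rewrite -E v'C.
  by move/(cK v'K wK); rewrite (negbTE v'w).
split => //; exists c; split => //; exact: nbrK vS cv.
Qed.

Lemma case1 C s0 : complete_set e C -> s0 \in C -> s0 \in S ->
  forall v w, ~~ branch_rel e C v w.
Proof.
move=> cC s0C s0S v w; apply/negP => B.
have [vC wC vw] := bfacts B.
have [vS wS [c [cC' cK' cv cw]]] := fact1 B.
have cs0 : c != s0 by apply/eqP => E; apply: (SK s0S); rewrite -E.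
have cs := cC c s0 cC' s0C cs0.
case: (three cK' vS wS s0S vw cv cw cs) => E.
  by move: vC; rewrite -E s0C.
by move: wC; rewrite -E s0C.
Qed.


Lemma lem2 a b x p q : a \in S -> b \in S -> a != b -> x \in K -> e x a -> e x b ->
  p \in K -> e p a -> ~~ e p b -> q \in K -> e q b -> ~~ e q a ->
  branch_rel e K a b.
Proof.
move=> aS bS ab xK xa xb pK pa pb qK qb qa.
have aK : a \notin K by apply/negP; apply: SK.
have bK : b \notin K by apply/negP; apply: SK.
rewrite /branch_rel /branch_set !inE aK bK ab (stS aS bS) /=.
apply/and5P; split.
- by apply/existsP; exists x; rewrite xK esym.
- by apply/existsP; exists x; rewrite xK esym.
- by apply/existsP; exists x; rewrite xK xa xb.
- by apply/existsP; exists p; rewrite pK pa pb.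
- by apply/existsP; exists q; rewrite qK qb qa.
Qed.

Lemma lem4 a b a' b' x : a \in S -> b \in S -> a != b ->
  ~~ branch_rel e K a b -> branch_rel e K a a' -> a' != b ->
  branch_rel e K b b' -> b' != a -> x \in K -> e x a -> e x b -> False.
Proof.
move=> aS bS ab nB Ba a'b Bb b'a xK xa xb.
have [_ _ aa'] := bfacts Ba; have [_ _ bb'] := bfacts Bb.
have [_ a'S [p [_ pK pa pa']]] := fact1 Ba.
have [_ b'S [q [_ qK qb qb']]] := fact1 Bb.
have npb : ~~ e p b.
  apply/negP => pb; case: (three pK aS a'S bS aa' pa pa' pb) => E.
    by move: ab; rewrite E eqxx.
  by move: a'b; rewrite E eqxx.
have nqa : ~~ e q a.
  apply/negP => qa; case: (three qK bS b'S aS bb' qb qb' qa) => E.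
    by move: ab; rewrite E eqxx.
  by move: b'a; rewrite E eqxx.
by move: nB; rewrite (lem2 aS bS ab xK xa xb pK pa npb qK qb nqa).
Qed.

Lemma sun_cycle k (g w : 'I_k -> T) : 2 < k -> injective g ->
  (forall i, g i \in S) -> (forall i, w i \in K) ->
  (forall i, e (w i) (g (ord_pred i))) -> (forall i, e (w i) (g i)) ->
  induced_sun e g w.
Proof.
move=> k2 ginj gS wK wp wg.
have k1 : 1 < k by apply: ltnW.
have key : forall i j, e (w j) (g i) -> i = j \/ i = ord_pred j.
  move=> i j h.
  have ne : g j != g (ord_pred j) by rewrite (inj_eq ginj) eq_sym pred_neq.
  by case: (three (wK j) (gS j) (gS _) (gS i) ne (wg j) (wp j) h) => /ginj; auto.
have winj : injective w.
  move=> i j eqw; apply/eqP; apply/negPn/negP => ij.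
  have h1 : e (w j) (g i) by rewrite -eqw.
  have h2 : e (w j) (g (ord_pred i)) by rewrite -eqw.
  case: (key _ _ h1) => [/eqP|h1']; first by rewrite (negbTE ij).
  case: (key _ _ h2) => h2'.
    by move: (pred_pred_neq i k2); rewrite h2' h1' eqxx.
  by move: ij; rewrite (ord_pred_inj h2') eqxx.
split => //; split => //; split.
  by move=> i j; apply/eqP => h; apply: (SK (gS i)); rewrite h wK.
split; first by move=> i j _; apply: stS.
split; first by move=> i j ij; apply: cK; rewrite ?wK // (inj_eq winj).
move=> i j; rewrite esym.
have -> : (val j == val i) || (val j == (val i).+1 %% k) = (j == i) || (j == ordS i) by [].
apply/idP/idP.
  by move/key => [->|->]; rewrite ?ord_predK ?eqxx ?orbT.
by case/orP => /eqP ->; rewrite ?wg // -{2}(ordSK i) wp.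
Qed.

Lemma hole_false m (f : 'I_m -> T) : odd m -> 5 <= m -> injective f ->
  (forall i j, branch_rel e K (f i) (f j) = cyc_adj i j) -> False.
Proof.
move=> om m5 finj H.
have m2 : 2 < m by apply: leq_trans m5.
have fS : forall i, f i \in S.
  move=> i; have B : branch_rel e K (f i) (f (ordS i)) by rewrite H cycE eqxx.
  by case: (fact1 B).
have : forall i, exists c, c \in K /\ e c (f (ord_pred i)) /\ e c (f i).
  move=> i; have B : branch_rel e K (f (ord_pred i)) (f i).
    by rewrite H cycE ord_predK eqxx.
  have [_ _ [c [_ cK' c1 c2]]] := fact1 B.
  by exists c.
case/fin_all_exists => w Hw.
have sun : induced_sun e f w.
  apply: sun_cycle => // i; by case: (Hw i) => [? []].
have m4 : 4 <= m by apply: ltnW.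
have mo : (m == 4) || odd m by rewrite om orbT.
have [x [xK [i [j [ij [nc [xi xj]]]]]]] := sunH m4 mo sun.
rewrite cycE negb_or in nc; case/andP: nc => nc1 nc2.
apply: (@lem4 (f i) (f j) (f (ordS i)) (f (ordS j)) x) => //.
- by rewrite (inj_eq finj).
- by rewrite H cycE negb_or nc1 nc2.
- by rewrite H cycE eqxx.
- by rewrite (inj_eq finj) eq_sym.
- by rewrite H cycE eqxx.
- by rewrite (inj_eq finj) eq_sym.
Qed.

Lemma anti_false m (f : 'I_m -> T) : odd m -> 5 <= m -> injective f ->
  (forall i j, branch_rel e K (f i) (f j) = (i != j) && ~~ cyc_adj i j) -> False.
Proof.
move=> om m5 finj H.
case: (ltnP m 6) => m6.
  have m5e : m = 5 by lia.
  subst m.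
  apply: (@hole_false 5 (f \o h5)) => //.
    by move=> i j /finj /h5inj.
  by move=> i j; rewrite /= H h5E.
have m7 : 7 <= m.
  have : m != 6 by apply/eqP => E; rewrite E in om.
  lia.
have cs : forall i j : 'I_m, val i < 5 -> val j < 5 ->
    cyc_adj i j = (val j == (val i).+1) || (val i == (val j).+1).
  move=> i j hi hj; apply: cyc_small; lia.
have l0 : 0 < m by lia.
have l1 : 1 < m by lia.
have l3 : 3 < m by lia.
have l4 : 4 < m by lia.
pose o0 := Ordinal l0. pose o1 := Ordinal l1.
pose o3 := Ordinal l3. pose o4 := Ordinal l4.
have E : forall i j : 'I_m, val i < 5 -> val j < 5 -> val i != val j ->
    ~~ ((val j == (val i).+1) || (val i == (val j).+1)) ->
    branch_rel e K (f i) (f j).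
  by move=> i j hi hj ij nc; rewrite H (cs i j hi hj) -val_eqE ij nc.
have N : forall i j : 'I_m, val i < 5 -> val j < 5 ->
    ((val j == (val i).+1) || (val i == (val j).+1)) ->
    ~~ branch_rel e K (f i) (f j).
  by move=> i j hi hj c; rewrite H (cs i j hi hj) c andbF.
have [f0S f3S _] := fact1 (E o0 o3 erefl erefl erefl erefl).
have [f1S f4S _] := fact1 (E o1 o4 erefl erefl erefl erefl).
pose s (i : 'I_4) := match val i with 0 => f o0 | 1 => f o3 | 2 => f o1 | _ => f o4 end.
have sinj : injective s.
  move=> i j; rewrite /s => Eq; apply: val_inj; move: Eq.
  case: i => [[|[|[|[|?]]]] ?] //; case: j => [[|[|[|[|?]]]] ?] //= /finj /(congr1 val) //.
have sS : forall i, s i \in S.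
  by move=> i; rewrite /s; case: i => [[|[|[|[|?]]]] ?].
have sE : forall i, branch_rel e K (s (ord_pred i)) (s i).
  move=> i; rewrite /s; case: i => [[|[|[|[|?]]]] ?] //=.
  - exact: (E o4 o0).
  - exact: (E o0 o3).
  - exact: (E o3 o1).
  - exact: (E o1 o4).
have : forall i, exists c, c \in K /\ e c (s (ord_pred i)) /\ e c (s i).
  move=> i; have [_ _ [c [_ cK' c1 c2]]] := fact1 (sE i).
  by exists c.
case/fin_all_exists => w Hw.
have sun : induced_sun e s w.
  apply: sun_cycle => // i; by case: (Hw i) => [? []].
have [x [xK [i [j [ij [nc [xi xj]]]]]]] := sunH (leqnn 4) erefl sun.
move: ij nc xi xj; rewrite /s.
case: i => [[|[|[|[|?]]]] ?] //; case: j => [[|[|[|[|?]]]] ?] //= _ _ xi xj.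
- apply: (@lem4 (f o0) (f o1) (f o3) (f o4) x) => //.
  + by rewrite (inj_eq finj) -val_eqE.
  + exact: (N o0 o1).
  + exact: (E o0 o3).
  + by rewrite (inj_eq finj) -val_eqE.
  + exact: (E o1 o4).
  + by rewrite (inj_eq finj) -val_eqE.
- apply: (@lem4 (f o3) (f o4) (f o0) (f o1) x) => //.
  + by rewrite (inj_eq finj) -val_eqE.
  + exact: (N o3 o4).
  + exact: (E o3 o0).
  + by rewrite (inj_eq finj) -val_eqE.
  + exact: (E o4 o1).
  + by rewrite (inj_eq finj) -val_eqE.
- apply: (@lem4 (f o1) (f o0) (f o4) (f o3) x) => //.
  + by rewrite (inj_eq finj) -val_eqE.
  + exact: (N o1 o0).
  + exact: (E o1 o4).
  + by rewrite (inj_eq finj) -val_eqE.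
  + exact: (E o0 o3).
  + by rewrite (inj_eq finj) -val_eqE.
- apply: (@lem4 (f o4) (f o3) (f o1) (f o0) x) => //.
  + by rewrite (inj_eq finj) -val_eqE.
  + exact: (N o4 o3).
  + exact: (E o4 o1).
  + by rewrite (inj_eq finj) -val_eqE.
  + exact: (E o3 o0).
  + by rewrite (inj_eq finj) -val_eqE.
Qed.

End Sec.

Theorem mainTheorem13 (T : finType) (e : rel T) (S K : {set T}) :
  simple_graph e -> connected_graph e ->
  SVS e S K ->
  forall C : {set T}, is_clique e C ->
  perfect_on (branch_set e C) (branch_rel e C).
Proof.
move=> [esym eirr] _ [[stS [[cK Kmax] [disj cov]]] [_ [deg sunH]]] C [cC Cmax].
case: (boolP [exists s0 in C, s0 \in S]) => [/existsP [s0 /andP [s0C s0S]]|noS].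
  have nB : forall v w, ~~ branch_rel e C v w.
    by apply: (case1 stS cK disj cov deg cC s0C s0S).
  split.
    move=> [m [f [om [m5 [finj [fB H]]]]]].
    have l0 : 0 < m by lia.
    have := H (Ordinal l0) (ordS (Ordinal l0)).
    by rewrite cycE eqxx (negbTE (nB _ _)).
  move=> [m [f [om [m5 [finj [fB H]]]]]].
  have l0 : 0 < m by lia.
  have l2 : 2 < m by lia.
  have := H (Ordinal l0) (Ordinal l2).
  rewrite (negbTE (nB _ _)) cyc_small /=; last 2 first.
  - by lia.
  - by lia.
  by [].
have sub : C \subset K.
  apply/subsetP => x xC; apply: (SorK cov); apply/negP => xS.
  by move/existsP: noS; apply; exists x; rewrite xC xS.
have KC := Cmax K cK sub; subst C.
split.
  move=> [m [f [om [m5 [finj [fB H]]]]]].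
  exact: (hole_false esym stS cK disj cov deg sunH om m5 finj H).
move=> [m [f [om [m5 [finj [fB H]]]]]].
exact: (anti_false esym stS cK disj cov deg sunH om m5 finj H).
Qed.
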